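(* Let $0<\nu<1$ and let $R,S,T,U>0$ satisfy \[ T=-\tfrac{1}{3}(\nu+1)R+\frac{R^2}{R+S}+\tfrac12,\qquad U=\tfrac16\Big(2S\big(\nu-\tfrac{3R}{R+S}+1\big)+3\Big). \] For $\theta\in\mathbb{R}$ let \[ A(\theta)=\begin{pmatrix} 1-\nu\big(1+(1-\nu)(U-T)\big)(1-e^{-I\theta}) & \nu(1-\nu)(Ue^{-I\theta}-T)(1-e^{-I\theta})\\ \nu(1-\nu)(R+S) & (1-\nu)(1-\nu R)+\nu\big(1-(1-\nu)S\big)e^{-I\theta} \end{pmatrix}, \] where $I$ is the imaginary unit, and let $\lambda_1(\theta)$ be the eigenvalue of $A(\theta)$ depending analytically on $\theta$ near $0$ with $\lambda_1(0)=1$. Then \[ \lambda_1(\theta)-e^{-I\nu\theta}=\frac{1}{72}(\nu-1)\nu\Big((\nu-2)(\nu+1)+\frac{18}{R+S}\Big)\theta^4+O(\theta^5)\quad(\theta\to0). \]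
   Context: $A(\theta)$ is the amplification matrix, acting on Fourier amplitudes $(\hat Q,\hat q)$ of cell averages and interface point values, of the following parameterized Active Flux scheme for $q_t+aq_x=0$, $a>0$, on a uniform grid with cells $[x_{i-1/2},x_{i+1/2}]$ of width $\Delta x$ and Courant number $\nu=a\Delta t/\Delta x$: $q^{n+1}_{i+1/2}=(1-\nu)q^n_{i+1/2}+\nu q^n_{i-1/2}-\nu(1-\nu)\big(R(q^n_{i+1/2}-Q^n_i)-S(Q^n_i-q^n_{i-1/2})\big)$, $\bar q_{i+1/2}=Q^n_i+(1-\nu)\big(T(q^n_{i+1/2}-Q^n_i)+U(Q^n_i-q^n_{i-1/2})\big)$, $Q^{n+1}_i=Q^n_i-\nu(\bar q_{i+1/2}-\bar q_{i-1/2})$. The exact amplification factor is $e^{-I\nu\theta}$. At $\theta=0$ the two eigenvalues of $A$ are $1$ and $1-\nu(1-\nu)(R+S)\neq1$, so $\lambda_1$ is well defined near $\theta=0$. *)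

(* Defs.v *)
From HB Require Import structures.
From mathcomp Require Import all_boot all_order all_algebra.
From mathcomp Require Import reals trigo.
From mathcomp Require Import complex.
Set Implicit Arguments. Unset Strict Implicit. Unset Printing Implicit Defensive.
Import Order.TTheory GRing.Theory Num.Theory.
Local Open Scope ring_scope.
Local Open Scope complex_scope.

Definition expi (R : realType) (x : R) : R[i] := cos x +i* sin x.

Definition Amat (R : realType) (nu r s t u th : R) : 'M[R[i]]_2 :=
  let e := expi (- th) in
  let n := nu%:C in
  let a11 := 1 - n * (1 + (1 - n) * (u%:C - t%:C)) * (1 - e) in
  let a12 := n * (1 - n) * (u%:C * e - t%:C) * (1 - e) in
  let a21 := n * (1 - n) * (r%:C + s%:C) in
  let a22 := (1 - n) * (1 - n * r%:C) + n * (1 - (1 - n) * s%:C) * e in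
  \matrix_(i < 2, j < 2)
    if (i == 0 :> nat) then (if (j == 0 :> nat) then a11 else a12)
    else (if (j == 0 :> nat) then a21 else a22).

(* Main.v *)
Require Import Defs.
From HB Require Import structures.
From mathcomp Require Import all_boot all_order all_algebra.
From mathcomp Require Import reals trigo.
From mathcomp Require Import complex.
From mathcomp Require Import derive normedtype topology.
From mathcomp Require Import ring lra.
Import Order.TTheory GRing.Theory Num.Theory.
Import numFieldNormedType.Exports.
Local Open Scope ring_scope.
Local Open Scope complex_scope.

Section Cx.
Variable R : realType.
Local Notation C := (R[i]).
Lemma mono0 (f df : R -> R) (y : R) : 0 <= y -> (forall x : R, is_derive x (1:R) f (df x)) ->
  (forall x, 0 <= x -> x <= y -> 0 <= df x) -> f 0 <= f y.
Proof.
move=> y0 fd dfp.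
have [|c c01 E] := MVT_segment y0 (fun x _ => fd x).
  apply: continuous_subspaceT => x.
  apply/differentiable_continuous/derivable1_diffP; have := fd x; by case.
rewrite -subr_ge0 E mulr_ge0 // ?subr0 //.
by move: c01; rewrite in_itv /= => /andP[? ?]; apply: dfp.
Qed.

Lemma tay1 (x : R) : 0 <= x -> sin x <= x.
Proof.
move=> x0; have := @mono0 (fun y => y - sin y) (fun y => 1 - cos y) x x0.
rewrite sin0 subr0 subr_ge0; apply.
by move=> y _ _; rewrite subr_ge0 cos_le1.
Qed.
Ltac dtac := move=> y; apply: is_derive_eq; rewrite /GRing.scale /=; field; rewrite ?pnatr_eq0 //.
Lemma tay2 (x : R) : 0 <= x -> 1 - x^+2/2 <= cos x.
Proof.
move=> x0; have := @mono0 (fun y => cos y - 1 + y^+2/2) (fun y => y - sin y) x x0.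
move=> H; have {H} : (fun y => cos y - 1 + y^+2/2) 0 <= (fun y => cos y - 1 + y^+2/2) x.
  apply: H; last by move=> y y0 _; by rewrite subr_ge0 tay1.
  dtac.
rewrite /= ?sin0 ?cos0 ?expr0n /=; lra.
Qed.
Lemma tay3 (x : R) : 0 <= x -> x - x^+3/6 <= sin x.
Proof.
move=> x0; have := @mono0 (fun y => sin y - y + y^+3/6) (fun y => cos y - 1 + y^+2/2) x x0.
move=> H; have {H} : (fun y => sin y - y + y^+3/6) 0 <= (fun y => sin y - y + y^+3/6) x.
  apply: H; last by move=> y y0 _; have := @tay2 y y0; lra.
  dtac.
rewrite /= ?sin0 ?cos0 ?expr0n /=; lra.
Qed.
Lemma tay4 (x : R) : 0 <= x -> cos x <= 1 - x^+2/2 + x^+4/24.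
Proof.
move=> x0; have := @mono0 (fun y => 1 - y^+2/2 + y^+4/24 - cos y) (fun y => sin y - y + y^+3/6) x x0.
move=> H; have {H} : (fun y => 1 - y^+2/2 + y^+4/24 - cos y) 0 <= (fun y => 1 - y^+2/2 + y^+4/24 - cos y) x.
  apply: H; last by move=> y y0 _; have := @tay3 y y0; lra.
  dtac.
rewrite /= ?sin0 ?cos0 ?expr0n /=; lra.
Qed.
Lemma tay5 (x : R) : 0 <= x -> sin x <= x - x^+3/6 + x^+5/120.
Proof.
move=> x0; have := @mono0 (fun y => y - y^+3/6 + y^+5/120 - sin y) (fun y => 1 - y^+2/2 + y^+4/24 - cos y) x x0.
move=> H; have {H} : (fun y => y - y^+3/6 + y^+5/120 - sin y) 0 <= (fun y => y - y^+3/6 + y^+5/120 - sin y) x.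
  apply: H; last by move=> y y0 _; have := @tay4 y y0; lra.
  dtac.
rewrite /= ?sin0 ?cos0 ?expr0n /=; lra.
Qed.
Lemma tay6 (x : R) : 0 <= x -> 1 - x^+2/2 + x^+4/24 - x^+6/720 <= cos x.
Proof.
move=> x0; have := @mono0 (fun y => cos y - 1 + y^+2/2 - y^+4/24 + y^+6/720) (fun y => y - y^+3/6 + y^+5/120 - sin y) x x0.
move=> H; have {H} : (fun y => cos y - 1 + y^+2/2 - y^+4/24 + y^+6/720) 0 <= (fun y => cos y - 1 + y^+2/2 - y^+4/24 + y^+6/720) x.
  apply: H; last by move=> y y0 _; have := @tay5 y y0; lra.
  dtac.
rewrite /= ?sin0 ?cos0 ?expr0n /=; lra.
Qed.

Lemma rtay (x : R) : `|x| <= 1 ->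
  `|sin x - (x - x^+3/6)| <= `|x|^+5 /\ `|cos x - (1 - x^+2/2 + x^+4/24)| <= `|x|^+5.
Proof.
have pos (y : R) : 0 <= y -> y <= 1 ->
  `|sin y - (y - y^+3/6)| <= y^+5 /\ `|cos y - (1 - y^+2/2 + y^+4/24)| <= y^+5.
  move=> y0 y1; have := @tay3 y y0; have := @tay5 y y0; have := @tay4 y y0.
  have := @tay6 y y0; have h6 : y^+6 <= y^+5.
    by rewrite exprS ler_piMl // exprn_ge0.
  have h5 : 0 <= y^+5 by rewrite exprn_ge0.
  by move=> *; split; rewrite ler_norml; lra.
case: (lerP 0 x) => x0 hx.
  by rewrite ger0_norm // in hx *; apply: pos.
rewrite ltr0_norm // in hx *.
have x0' : 0 <= - x by rewrite oppr_ge0 ltW.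
have [h1 h2] := pos (- x) x0' hx.
split.
  have -> : sin x - (x - x ^+ 3 / 6) = - (sin (-x) - (-x - (-x) ^+ 3 / 6)).
    by rewrite sinN; ring.
  by rewrite normrN.
have -> : cos x - (1 - x ^+ 2 / 2 + x ^+ 4 / 24) = cos (-x) - (1 - (-x) ^+ 2 / 2 + (-x) ^+ 4 / 24).
  by rewrite cosN; ring.
by [].
Qed.
Lemma normC_real (x : R) : `|x%:C| = `|x|%:C.
Proof. by rewrite normc_def /= expr0n /= addr0 sqrtr_sqr. Qed.
Lemma normCi : `|'i : C| = 1.
Proof. by rewrite normc_def /= expr0n /= add0r expr1n sqrtr1. Qed.
Lemma norm_expi (x : R) : `|expi x| = 1.
Proof. by rewrite normc_def /= cos2Dsin2 sqrtr1. Qed.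
Lemma normC_re (z : C) : `|z| = (@complex.Re R `|z|)%:C.
Proof. by rewrite RRe_real // normr_real. Qed.

Lemma bD (a b : C) (A B : R) : `|a| <= A%:C -> `|b| <= B%:C -> `|a + b| <= (A + B)%:C.
Proof. move=> ha hb; rewrite rmorphD; apply: (le_trans (ler_normD _ _)); exact: lerD. Qed.
Lemma bM (a b : C) (A B : R) : `|a| <= A%:C -> `|b| <= B%:C -> `|a * b| <= (A * B)%:C.
Proof. move=> ha hb; rewrite rmorphM normrM; apply: ler_pM => //. Qed.
Lemma bN (a : C) (A : R) : `|a| <= A%:C -> `|- a| <= A%:C.
Proof. by rewrite normrN. Qed.
Lemma bX (a : C) (A : R) k : `|a| <= A%:C -> `|a ^+ k| <= (A ^+ k)%:C.
Proof. move=> ha; rewrite rmorphXn normrX; apply: lerXn2r => //. 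
  by apply: le_trans ha. Qed.
Lemma bC (a : C) : `|a| <= (@complex.Re R `|a|)%:C.
Proof. by rewrite -normC_re. Qed.

Definition T (z : C) : C := 1 + z + z^+2/2%:R + z^+3/6%:R + z^+4/24%:R.
Lemma i3 : ('i : C)^+3 = - 'i.
Proof. by rewrite exprS sqr_i mulrN1. Qed.
Lemma i4 : ('i : C)^+4 = 1.
Proof. by rewrite exprS i3 mulrN -expr2 sqr_i opprK. Qed.
Lemma ctay (x : R) : `|x| <= 1 -> `|expi x - T ('i * x%:C)| <= (2 * `|x|^+5)%:C.
Proof.
move=> hx.
have e1 : (cos x - (1 - x^+2/2 + x^+4/24))%:C = (cos x)%:C - (1 - x%:C^+2/2 + x%:C^+4/24).
  by rewrite !(rmorphB, rmorphD, rmorphM, rmorphXn, fmorphV, rmorph_nat, rmorph1).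
have e2 : (sin x - (x - x^+3/6))%:C = (sin x)%:C - (x%:C - x%:C^+3/6).
  by rewrite !(rmorphB, rmorphD, rmorphM, rmorphXn, fmorphV, rmorph_nat, rmorph1).
have e3 : expi x = (cos x)%:C + 'i * (sin x)%:C by exact: complexE.
have -> : expi x - T('i * x%:C) =
   (cos x - (1 - x^+2/2 + x^+4/24))%:C + 'i * (sin x - (x - x^+3/6))%:C.
  rewrite e1 e2 e3 /T.
  rewrite !exprMn sqr_i i3 i4.
  field; rewrite ?pnatr_eq0 //.
have [h1 h2] := @rtay x hx.
apply: (le_trans (ler_normD _ _)).
rewrite normrM normCi mul1r !normC_real mulr2n mulrDl mul1r rmorphD.
by apply: lerD; rewrite lecR.
Qed.
End Cx.
Arguments normC_re {R}.
Arguments normC_real {R}.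
Arguments norm_expi {R}.
Arguments ctay {R}.
Arguments rtay {R}.
Arguments T {R}.

Lemma eig2 (F : fieldType) (A : 'M[F]_2) a : eigenvalue A a ->
  (a - A 0 0) * (a - A 1 1) - A 0 1 * A 1 0 = 0.
Proof.
case/eigenvalueP => v hv vnz.
have h0 := congr1 (fun M : 'M[F]_(1,2) => M 0 0) hv; have h1 := congr1 (fun M : 'M[F]_(1,2) => M 0 1) hv.
have l1 : lift ord0 ord0 = 1 :> 'I_2 by apply/val_inj.
have l0 : ord0 = 0 :> 'I_2 by apply/val_inj.
rewrite /= !mxE !big_ord_recl !big_ord0 /= l1 l0 in h0 h1.
set d := (a - A 0 0) * (a - A 1 1) - A 0 1 * A 1 0.
have X0 : v 0 0 * A 0 0 + (v 0 1 * A 1 0 + 0) - a * v 0 0 = 0 by rewrite h0 subrr.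
have Y1 : v 0 0 * A 0 1 + (v 0 1 * A 1 1 + 0) - a * v 0 1 = 0 by rewrite h1 subrr.
have d0 : d * v 0 0 = 0.
  rewrite (_ : d * v 0 0 = - ((a - A 1 1) * (v 0 0 * A 0 0 + (v 0 1 * A 1 0 + 0) - a * v 0 0)
     + A 1 0 * (v 0 0 * A 0 1 + (v 0 1 * A 1 1 + 0) - a * v 0 1))); last by rewrite /d; ring.
  by rewrite X0 Y1 !mulr0 addr0 oppr0.
have d1 : d * v 0 1 = 0.
  rewrite (_ : d * v 0 1 = - ((a - A 0 0) * (v 0 0 * A 0 1 + (v 0 1 * A 1 1 + 0) - a * v 0 1)
     + A 0 1 * (v 0 0 * A 0 0 + (v 0 1 * A 1 0 + 0) - a * v 0 0))); last by rewrite /d; ring.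
  by rewrite X0 Y1 !mulr0 addr0 oppr0.
have [z0|nz0] := eqVneq (v 0 0) 0; last by move/eqP: d0; rewrite mulf_eq0 (negbTE nz0) orbF => /eqP.
have [z1|nz1] := eqVneq (v 0 1) 0; last by move/eqP: d1; rewrite mulf_eq0 (negbTE nz1) orbF => /eqP.
case/eqP: vnz; apply/matrixP => i j; rewrite !ord1 mxE.
by case: j => [[|[|k]]] hj //; [rewrite (_ : Ordinal hj = 0) ?z0 //| rewrite (_ : Ordinal hj = 1) ?z1 //]; apply/val_inj.
Qed.

Arguments bD {R a b A B}.
Arguments bM {R a b A B}.
Arguments bN {R a A}.
Arguments bX {R a A} k.
Arguments bC {R} a.
Section Alg.
Variable R : realType.
Local Notation C := (R[i]).
Definition Gf (n r s t u e m : C) : C :=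
  let a11 := 1 - n * (1 + (1 - n) * (u - t)) * (1 - e) in
  let a12 := n * (1 - n) * (u * e - t) * (1 - e) in
  let a21 := n * (1 - n) * (r + s) in
  let a22 := (1 - n) * (1 - n * r) + n * (1 - (1 - n) * s) * e in
  (m - a11) * (m - a22) - a12 * a21.
Definition H1f (n r s t u e E m M : C) : C := (2%:R * n - 2%:R * n * m + n * u - n * u * m - n * t + n * t * m - n * s + n * s * m - 2%:R * n^+2 + n^+2 * E + n^+2 * e - 3%:R * n^+2 * u + n^+2 * u * m + n^+2 * u * E + n^+2 * u * e + 3%:R * n^+2 * t - n^+2 * t * m - n^+2 * t * E - n^+2 * t * e + 2%:R * n^+2 * s - n^+2 * s * m - n^+2 * s * E - n^+2 * s * e - 2%:R * n^+2 * s * t + n^+2 * s * t * E + n^+2 * s * t * e - n^+2 * r - 2%:R * n^+2 * r * u + n^+2 * r * u * E + n^+2 * r * u * e + 2%:R * n^+3 * u - n^+3 * u * E - n^+3 * u * e - 2%:R * n^+3 * t + n^+3 * t * E + n^+3 * t * e - n^+3 * s + n^+3 * s * E + n^+3 * s * e + 4%:R * n^+3 * s * t - 2%:R * n^+3 * s * t * E - 2%:R * n^+3 * s * t * e + n^+3 * r + 4%:R * n^+3 * r * u - 2%:R * n^+3 * r * u * E - 2%:R * n^+3 * r * u * e - 2%:R * n^+4 * s * t + n^+4 * s * t * E + n^+4 * s * t * e - 2%:R * n^+4 * r * u + n^+4 * r * u * E + n^+4 * r * u * e).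
Definition H2f (n r s t u e E m M : C) : C := (- 2%:R + M + m + 2%:R * n - 2%:R * n * E + n * u - n * u * E - n * t + n * t * E + n * s * E + n * r - n^+2 * u + n^+2 * u * E + n^+2 * t - n^+2 * t * E - n^+2 * s * E - n^+2 * r).
Definition Qf (n r s t u c w : C) : C := (c^+2 * w^+3 - n * c * w - (1%:R/3%:R) * n * c * w^+2 - (1%:R/12%:R) * n * c * w^+3 - n * u * c - (1%:R/2%:R) * n * u * c * w - (1%:R/6%:R) * n * u * c * w^+2 - (1%:R/24%:R) * n * u * c * w^+3 + n * t * c + (1%:R/2%:R) * n * t * c * w + (1%:R/6%:R) * n * t * c * w^+2 + (1%:R/24%:R) * n * t * c * w^+3 + n * s * c + (1%:R/2%:R) * n * s * c * w + (1%:R/6%:R) * n * s * c * w^+2 + (1%:R/24%:R) * n * s * c * w^+3 + (1%:R/6%:R) * n^+2 + (5%:R/72%:R) * n^+2 * w + (1%:R/72%:R) * n^+2 * w^+2 + (1%:R/576%:R) * n^+2 * w^+3 + n^+2 * c * w + (5%:R/24%:R) * n^+2 * u + (5%:R/72%:R) * n^+2 * u * w + (1%:R/72%:R) * n^+2 * u * w^+2 + (1%:R/576%:R) * n^+2 * u * w^+3 + n^+2 * u * c + (1%:R/2%:R) * n^+2 * u * c * w + (1%:R/6%:R) * n^+2 * u * c * w^+2 + (1%:R/24%:R) * n^+2 * u * c * w^+3 - (5%:R/24%:R) * n^+2 * t - (5%:R/72%:R) * n^+2 * t * w - (1%:R/72%:R) * n^+2 * t * w^+2 - (1%:R/576%:R)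 * n^+2 * t * w^+3 - n^+2 * t * c - (1%:R/2%:R) * n^+2 * t * c * w - (1%:R/6%:R) * n^+2 * t * c * w^+2 - (1%:R/24%:R) * n^+2 * t * c * w^+3 - (5%:R/24%:R) * n^+2 * s - (5%:R/72%:R) * n^+2 * s * w - (1%:R/72%:R) * n^+2 * s * w^+2 - (1%:R/576%:R) * n^+2 * s * w^+3 - n^+2 * s * c - (1%:R/2%:R) * n^+2 * s * c * w - (1%:R/6%:R) * n^+2 * s * c * w^+2 - (1%:R/24%:R) * n^+2 * s * c * w^+3 + (1%:R/4%:R) * n^+2 * s * t + (5%:R/72%:R) * n^+2 * s * t * w + (1%:R/72%:R) * n^+2 * s * t * w^+2 + (1%:R/576%:R) * n^+2 * s * t * w^+3 + (1%:R/4%:R) * n^+2 * r * u + (5%:R/72%:R) * n^+2 * r * u * w + (1%:R/72%:R) * n^+2 * r * u * w^+2 + (1%:R/576%:R) * n^+2 * r * u * w^+3 - (1%:R/6%:R) * n^+3 - (1%:R/24%:R) * n^+3 * w + (1%:R/3%:R) * n^+3 * c * w^+2 - (7%:R/24%:R) * n^+3 * u - (13%:R/144%:R) * n^+3 * u * w - (1%:R/72%:R) * n^+3 * u * w^+2 - (1%:R/576%:R) * n^+3 * u * w^+3 + (7%:R/24%:R) * n^+3 * t + (13%:R/144%:R) * n^+3 * t * w + (1%:R/72%:R) * n^+3 * t * w^+2 + (1%:R/576%:R) * n^+3 * t * w^+3 + (7%:R/24%:R) * n^+3 * s + (13%:R/144%:R) * n^+3 * s * w + (1%:R/72%:R) *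 n^+3 * s * w^+2 + (1%:R/576%:R) * n^+3 * s * w^+3 - (1%:R/2%:R) * n^+3 * s * t - (5%:R/36%:R) * n^+3 * s * t * w - (1%:R/36%:R) * n^+3 * s * t * w^+2 - (1%:R/288%:R) * n^+3 * s * t * w^+3 - (1%:R/2%:R) * n^+3 * r * u - (5%:R/36%:R) * n^+3 * r * u * w - (1%:R/36%:R) * n^+3 * r * u * w^+2 - (1%:R/288%:R) * n^+3 * r * u * w^+3 - (1%:R/6%:R) * n^+4 - (1%:R/18%:R) * n^+4 * w - (1%:R/72%:R) * n^+4 * w^+2 + (1%:R/12%:R) * n^+4 * c * w^+3 - (1%:R/144%:R) * n^+4 * u * w - (1%:R/144%:R) * n^+4 * u * w^+2 + (1%:R/144%:R) * n^+4 * t * w + (1%:R/144%:R) * n^+4 * t * w^+2 + (1%:R/144%:R) * n^+4 * s * w + (1%:R/144%:R) * n^+4 * s * w^+2 + (1%:R/4%:R) * n^+4 * s * t + (5%:R/72%:R) * n^+4 * s * t * w + (1%:R/72%:R) * n^+4 * s * t * w^+2 + (1%:R/576%:R) * n^+4 * s * t * w^+3 + (1%:R/4%:R) * n^+4 * r * u + (5%:R/72%:R) * n^+4 * r * u * w + (1%:R/72%:R) * n^+4 * r * u * w^+2 + (1%:R/576%:R) * n^+4 * r * u * w^+3 + (1%:R/6%:R) * n^+5 - (1%:R/24%:R) * n^+5 * w - (1%:R/72%:R) * n^+5 * w^+2 - (1%:R/288%:R) * n^+5 * w^+3 + (1%:R/24%:R) * n^+5 * u + (1%:R/144%:R) * n^+5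 * u * w - (1%:R/576%:R) * n^+5 * u * w^+3 - (1%:R/24%:R) * n^+5 * t - (1%:R/144%:R) * n^+5 * t * w + (1%:R/576%:R) * n^+5 * t * w^+3 - (1%:R/24%:R) * n^+5 * s - (1%:R/144%:R) * n^+5 * s * w + (1%:R/576%:R) * n^+5 * s * w^+3 + (5%:R/72%:R) * n^+6 * w + (1%:R/24%:R) * n^+6 * u + (1%:R/48%:R) * n^+6 * u * w + (1%:R/144%:R) * n^+6 * u * w^+2 + (1%:R/576%:R) * n^+6 * u * w^+3 - (1%:R/24%:R) * n^+6 * t - (1%:R/48%:R) * n^+6 * t * w - (1%:R/144%:R) * n^+6 * t * w^+2 - (1%:R/576%:R) * n^+6 * t * w^+3 - (1%:R/24%:R) * n^+6 * s - (1%:R/48%:R) * n^+6 * s * w - (1%:R/144%:R) * n^+6 * s * w^+2 - (1%:R/576%:R) * n^+6 * s * w^+3 + (1%:R/72%:R) * n^+7 * w^+2 + (1%:R/576%:R) * n^+8 * w^+3).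
Definition a2f (n r s t u c : C) : C := (- (1%:R/2%:R) * n^+2 * s + n^+2 * s * t - (1%:R/2%:R) * n^+2 * r + n^+2 * r * u + n^+3 * s - 2%:R * n^+3 * s * t + n^+3 * r - 2%:R * n^+3 * r * u - (1%:R/2%:R) * n^+4 * s + n^+4 * s * t - (1%:R/2%:R) * n^+4 * r + n^+4 * r * u).
Definition a3f (n r s t u c : C) : C := ((1%:R/2%:R) * n^+2 * u - (1%:R/2%:R) * n^+2 * t - (2%:R/3%:R) * n^+2 * s + n^+2 * s * t - (1%:R/6%:R) * n^+2 * r + n^+2 * r * u - n^+3 * u + n^+3 * t + (7%:R/6%:R) * n^+3 * s - 2%:R * n^+3 * s * t + (1%:R/6%:R) * n^+3 * r - 2%:R * n^+3 * r * u + (1%:R/2%:R) * n^+4 * u - (1%:R/2%:R) * n^+4 * t - (1%:R/3%:R) * n^+4 * s + n^+4 * s * t + (1%:R/6%:R) * n^+4 * r + n^+4 * r * u - (1%:R/6%:R) * n^+5 * s - (1%:R/6%:R) * n^+5 * r).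
Definition a4f (n r s t u c : C) : C := (n * s * c + n * r * c + (1%:R/4%:R) * n^+2 + (5%:R/12%:R) * n^+2 * u - (5%:R/12%:R) * n^+2 * t - (11%:R/24%:R) * n^+2 * s - n^+2 * s * c + (7%:R/12%:R) * n^+2 * s * t - (1%:R/24%:R) * n^+2 * r - n^+2 * r * c + (7%:R/12%:R) * n^+2 * r * u - (1%:R/2%:R) * n^+3 - (2%:R/3%:R) * n^+3 * u + (2%:R/3%:R) * n^+3 * t + (17%:R/24%:R) * n^+3 * s - (7%:R/6%:R) * n^+3 * s * t + (1%:R/24%:R) * n^+3 * r - (7%:R/6%:R) * n^+3 * r * u + (1%:R/4%:R) * n^+4 + (1%:R/12%:R) * n^+4 * u - (1%:R/12%:R) * n^+4 * t - (1%:R/12%:R) * n^+4 * s + (7%:R/12%:R) * n^+4 * s * t + (7%:R/12%:R) * n^+4 * r * u + (1%:R/6%:R) * n^+5 * u - (1%:R/6%:R) * n^+5 * t - (1%:R/8%:R) * n^+5 * s + (1%:R/24%:R) * n^+5 * r - (1%:R/24%:R) * n^+6 * s - (1%:R/24%:R) * n^+6 * r).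
Lemma id1 (n r s t u e E m M : C) : Gf n r s t u e m - Gf n r s t u E M =
  (e - E) * H1f n r s t u e E m M + (m - M) * H2f n r s t u e E m M.
Proof. rewrite /Gf /H1f /H2f; ring. Qed.
Lemma id2 (n r s t u c w : C) :
  Gf n r s t u (T w) (T (n * w) + c * w^+4) =
  w^+5 * Qf n r s t u c w + a2f n r s t u c * w^+2 + a3f n r s t u c * w^+3 + a4f n r s t u c * w^+4.
Proof. rewrite /Gf /T /Qf /a2f /a3f /a4f; field; rewrite ?pnatr_eq0 //. Qed.
Definition relG (n r s t u c : C) :=
  [/\ r + s != 0,
  t = - (n + 1) * r / 3 + r ^+ 2 / (r + s) + 1 / 2,
  u = (2 * s * (n - 3 * r / (r + s) + 1) + 3) / 6 &
  c = (n - 1) * n * ((n - 2) * (n + 1) + 18 / (r + s)) / 72].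
Lemma ak0 (n r s t u c : C) : relG n r s t u c ->
  [/\ a2f n r s t u c = 0, a3f n r s t u c = 0 & a4f n r s t u c = 0].
Proof.
case=> hrs -> -> ->; rewrite /a2f /a3f /a4f; split; field => //.
Qed.

Ltac bnd := lazymatch goal with
 | |- is_true (`|_ + _| <= _) => apply: bD; bnd
 | |- is_true (`|_ * _| <= _) => apply: bM; bnd
 | |- is_true (`|- _| <= _) => apply: bN; bnd
 | |- is_true (`|_ ^+ _| <= _) => apply: bX; bnd
 | |- _ => first [eassumption | apply: bC]
 end.

Lemma core (n rr ss tt uu cr : C) : relG n rr ss tt uu cr ->
  exists K : R, forall (w e f : C) (rho : R), `|w| = rho%:C -> rho <= 1 ->
    `|e| <= (1:R)%:C -> `|f| <= (1:R)%:C ->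
    `|e - T w| <= (2 * rho^+5)%:C -> `|f - T (n * w)| <= (2 * rho^+5)%:C ->
    `|Gf n rr ss tt uu e (f + cr * w^+4)| <= (K * rho^+5)%:C.
Proof.
move=> hrel; have [z2 z3 z4] := @ak0 n rr ss tt uu cr hrel.
have [KQ hQ] : exists K : R, forall w : C, `|w| <= (1:R)%:C ->
   `|Qf n rr ss tt uu cr w| <= K%:C.
  by eexists => w hw; rewrite /Qf; bnd.
have [K1 h1] : exists K : R, forall w e f : C, `|w| <= (1:R)%:C -> `|e| <= (1:R)%:C ->
   `|f| <= (1:R)%:C ->
   `|H1f n rr ss tt uu e (T w) (f + cr * w^+4) (T (n*w) + cr*w^+4)| <= K%:C.
  by eexists => w e f hw he hf; rewrite /H1f /T; bnd.
have [K2 h2] : exists K : R, forall w e f : C, `|w| <= (1:R)%:C -> `|e| <= (1:R)%:C ->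
   `|f| <= (1:R)%:C ->
   `|H2f n rr ss tt uu e (T w) (f + cr * w^+4) (T (n*w) + cr*w^+4)| <= K%:C.
  by eexists => w e f hw he hf; rewrite /H2f /T; bnd.
exists (KQ + 2 * K1 + 2 * K2) => w e f rho hw hr1 he hf hE hF.
have hw1 : `|w| <= (1:R)%:C by rewrite hw lecR.
have hwr : `|w| <= rho%:C by rewrite hw.
have -> : Gf n rr ss tt uu e (f + cr * w^+4) =
   Gf n rr ss tt uu (T w) (T (n*w) + cr*w^+4)
   + ((e - T w) * H1f n rr ss tt uu e (T w) (f + cr * w^+4) (T (n*w) + cr*w^+4)
   + ((f + cr * w^+4) - (T (n*w) + cr*w^+4)) * H2f n rr ss tt uu e (T w) (f + cr * w^+4) (T (n*w) + cr*w^+4)).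
  by rewrite -id1 [X in _ = X]addrC subrK.
rewrite id2 z2 z3 z4 !mul0r !addr0.
have -> : (f + cr * w^+4) - (T (n*w) + cr*w^+4) = f - T (n * w) by ring.
apply: le_trans (bD (bM (bX 5 hwr) (hQ w hw1)) (bD (bM hE (h1 w e f hw1 he hf)) (bM hF (h2 w e f hw1 he hf)))) _.
rewrite lecR.
have -> : (KQ + 2 * K1 + 2 * K2) * rho ^+ 5 = rho ^+ 5 * KQ + (2 * rho ^+ 5 * K1 + 2 * rho ^+ 5 * K2) by ring.
by [].
Qed.

Lemma den (n rr ss tt uu cr : C) :
  exists K : R, forall (w e f : C) (rho : R), `|w| = rho%:C -> 0 <= rho -> rho <= 1 ->
    `|e - T w| <= (2 * rho^+5)%:C -> `|f - T (n * w)| <= (2 * rho^+5)%:C ->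
    `|(f + cr * w^+4) - 1| + `|n * (1 + (1 - n) * (uu - tt)) + n * (1 - (1 - n) * ss)| * `|1 - e|
      <= (K * rho)%:C.
Proof.
have [K1 h1] : exists K : R, forall w : C, `|w| <= (1:R)%:C ->
   `|n + n^+2 * w / 2%:R + n^+3 * w^+2 / 6%:R + n^+4 * w^+3 / 24%:R + cr * w^+3| <= K%:C.
  by eexists => w hw; bnd.
have [K2 h2] : exists K : R, forall w : C, `|w| <= (1:R)%:C ->
   `|1 + w / 2%:R + w^+2 / 6%:R + w^+3 / 24%:R| <= K%:C.
  by eexists => w hw; bnd.
set N := n * (1 + (1 - n) * (uu - tt)) + n * (1 - (1 - n) * ss).
exists (2 + K1 + (@complex.Re R `|N|) * (2 + K2)) => w e f rho hw r0 r1 hE hF.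
have hw1 : `|w| <= (1:R)%:C by rewrite hw lecR.
have hwr : `|w| <= rho%:C by rewrite hw.
have r5 : rho ^+ 5 <= rho.
  have h4 : rho^+4 <= 1 by rewrite exprn_ile1.
  have h5 : rho^+5 = rho * rho^+4 by rewrite exprS.
  rewrite h5; nra.
have hE' : `|e - T w| <= (2 * rho)%:C by apply: le_trans hE _; rewrite lecR; lra.
have hF' : `|f - T (n * w)| <= (2 * rho)%:C by apply: le_trans hF _; rewrite lecR; lra.
have -> : (f + cr * w^+4) - 1 = (f - T (n * w)) + w * (n + n^+2 * w / 2%:R + n^+3 * w^+2 / 6%:R + n^+4 * w^+3 / 24%:R + cr * w^+3).
  rewrite /T; field; rewrite ?pnatr_eq0 //.
have -> : 1 - e = - (e - T w) + - (w * (1 + w / 2%:R + w^+2 / 6%:R + w^+3 / 24%:R)).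
  rewrite /T; field; rewrite ?pnatr_eq0 //.
have hN := bC N.
apply: le_trans (lerD (bD hF' (bM hwr (h1 w hw1))) (ler_pM _ _ hN (bD (bN hE') (bN (bM hwr (h2 w hw1)))))) _.
- by [].
- by [].
rewrite -rmorphM -rmorphD lecR.
have -> : (2 + K1 + complex.Re `|N| * (2 + K2)) * rho = 2 * rho + rho * K1 + complex.Re `|N| * (2 * rho + rho * K2) by ring.
by [].
Qed.
End Alg.
Arguments relG {R}.
Arguments core {R}.
Arguments den {R}.
Arguments Gf {R}.

Lemma reC (R : realType) (z : R[i]) (x : R) : (`|z| <= x%:C) = (complex.Re `|z| <= x).
Proof. by rewrite {1}normC_re lecR. Qed.
Lemma reCl (R : realType) (z : R[i]) (x : R) : (`|z| < x%:C) = (complex.Re `|z| < x).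
Proof. by rewrite {1}normC_re ltcR. Qed.
Lemma reCM (R : realType) (z y : R[i]) : complex.Re `|z * y| = complex.Re `|z| * complex.Re `|y|.
Proof. by rewrite normrM {1}normC_re {1}(normC_re y) -rmorphM. Qed.
Lemma reCD (R : realType) (z y : R[i]) : complex.Re `|z + y| <= complex.Re `|z| + complex.Re `|y|.
Proof. by have := ler_normD z y; rewrite (normC_re (z+y)) (normC_re z) (normC_re y) -rmorphD lecR. Qed.
Lemma reC0 (R : realType) (z : R[i]) : 0 <= complex.Re `|z|.
Proof. by have := normr_ge0 z; rewrite normC_re ler0c. Qed.
Lemma reCN (R : realType) (z : R[i]) : complex.Re `|- z| = complex.Re `|z|.
Proof. by rewrite normrN. Qed.

Arguments reCD {R}.
Arguments reC0 {R}.
Arguments reCM {R}.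
Arguments reCN {R}.

Theorem mainTheorem1 (R : realType) (nu r s t u : R) :
  0 < nu < 1 -> 0 < r -> 0 < s -> 0 < t -> 0 < u ->
  t = - (nu + 1) * r / 3 + r ^+ 2 / (r + s) + 1 / 2 ->
  u = (2 * s * (nu - 3 * r / (r + s) + 1) + 3) / 6 ->
  forall lam : R -> R[i],
  lam 0 = 1 ->
  (forall eps : R, 0 < eps -> exists2 d : R, 0 < d &
     forall th : R, `|th| < d -> `|lam th - 1| < eps%:C) ->
  (exists2 d : R, 0 < d &
     forall th : R, `|th| < d -> eigenvalue (Amat nu r s t u th) (lam th)) ->
  exists2 C : R, 0 < C & exists2 d : R, 0 < d &
    forall th : R, `|th| < d ->
      `|lam th - expi (- (nu * th))
        - ((nu - 1) * nu * ((nu - 2) * (nu + 1) + 18 / (r + s)) / 72)%:C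
          * th%:C ^+ 4| <= C%:C * `|th|%:C ^+ 5.
Proof.
move=> /andP[nu0 nu1] r0 s0 t0 u0 ht hu lam hl0 hcont [d0 d0p heig].
set cx := (nu - 1) * nu * ((nu - 2) * (nu + 1) + 18 / (r + s)) / 72.
have rs0 : 0 < r + s by lra.
have hrel : relG nu%:C r%:C s%:C t%:C u%:C cx%:C.
  split.
  - by rewrite -rmorphD -(rmorph0 (real_complex R)) (inj_eq (@complexI R)) gt_eqF.
  - by rewrite ht !(rmorphB, rmorphD, rmorphM, rmorphN, rmorphXn, fmorphV, rmorph_nat, rmorph1).
  - by rewrite hu !(rmorphB, rmorphD, rmorphM, rmorphN, rmorphXn, fmorphV, rmorph_nat, rmorph1).
  - by rewrite /cx !(rmorphB, rmorphD, rmorphM, rmorphN, rmorphXn, fmorphV, rmorph_nat, rmorph1).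
set n := nu%:C; set rr := r%:C; set ss := s%:C; set tt := t%:C; set uu := u%:C.
set cr := cx%:C.
have [K hK] := core n rr ss tt uu cr hrel.
have [Kd hKd] := den n rr ss tt uu cr.
set ka := nu * (1 - nu) * (r + s).
have ka0 : 0 < ka by rewrite /ka !mulr_gt0 // subr_gt0.
have [dl dlp hdl] := hcont (ka / 4) ltac:(by rewrite divr_gt0).
have Kd1 : 0 < `|Kd| + 1 by have := normr_ge0 Kd; lra.
exists (2 * `|K| / ka + 1).
  have : 0 <= 2 * `|K| / ka.
    by apply: divr_ge0; [apply: mulr_ge0 => //; apply: normr_ge0 | apply: ltW].
  lra.
exists (Num.min (Num.min d0 dl) (Num.min 1 (ka / (4 * (`|Kd| + 1))))).
  by rewrite !lt_min d0p dlp ltr01 /= divr_gt0 // mulr_gt0.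
move=> th; rewrite !lt_min => /andP[/andP[hd0 hdl'] /andP[h1 hk]].
set rho := `|th|.
have rho0 : 0 <= rho by rewrite normr_ge0.
have rho1 : rho <= 1 by rewrite ltW.
set e := expi (- th); set f := expi (- (nu * th)).
set w : R[i] := 'i * (- th)%:C.
have hw : `|w| = rho%:C by rewrite normrM normCi mul1r normC_real normrN.
have he : `|e| <= (1:R)%:C by rewrite norm_expi.
have hf : `|f| <= (1:R)%:C by rewrite norm_expi.
have hE : `|e - T w| <= (2 * rho ^+ 5)%:C.
  have hth1 : `|- th| <= 1 by rewrite normrN.
  by have := ctay (- th) hth1; rewrite normrN.
have hnt : `|- (nu * th)| <= rho.
  by rewrite normrN normrM (gtr0_norm nu0) ler_piMl // ltW.
have hF : `|f - T (n * w)| <= (2 * rho ^+ 5)%:C.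
  have -> : n * w = 'i * (- (nu * th))%:C by rewrite /w /n !rmorphN rmorphM; ring.
  apply: le_trans (ctay (- (nu * th)) (le_trans hnt rho1)) _.
  rewrite lecR ler_pM2l // lerXn2r // ?nnegrE ?normr_ge0 //.
have hG := hK w e f rho hw rho1 he hf hE hF.
have hD := hKd w e f rho hw rho0 rho1 hE hF.
have hl := hdl th hdl'.
set mu := f + cr * w^+4 in hG hD *.
set N := n * (1 + (1 - n) * (uu - tt)) + n * (1 - (1 - n) * ss) in hD.
have hev : Gf n rr ss tt uu e (lam th) = 0.
  have := @eig2 _ _ _ (heig th hd0); rewrite /Amat !mxE /=.
  by move=> H; rewrite /Gf /=; exact: H.
set D := lam th + mu - (1 - n * (1 + (1 - n) * (uu - tt)) * (1 - e))
   - ((1 - n) * (1 - n * rr) + n * (1 - (1 - n) * ss) * e).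
have hid : (lam th - mu) * D = - Gf n rr ss tt uu e mu.
  have -> : - Gf n rr ss tt uu e mu = Gf n rr ss tt uu e (lam th) - Gf n rr ss tt uu e mu.
    by rewrite hev sub0r.
  rewrite /D /Gf /=; ring.
have kaC : ka%:C = n * (1 - n) * (rr + ss).
  by rewrite /ka /n /rr /ss !(rmorphM, rmorphB, rmorphD, rmorph1).
have hDk : ka%:C - D = - ((lam th - 1) + (mu - 1) + N * (1 - e)).
  by rewrite kaC /D /N; ring.
rewrite reC in hG.
rewrite (normC_re (mu - 1)) (normC_re N) (normC_re (1 - e)) -rmorphM -rmorphD lecR in hD.
rewrite reCl in hl.
have hLD : complex.Re `|lam th - mu| * complex.Re `|D| = complex.Re `|Gf n rr ss tt uu e mu|.
  by rewrite -reCM hid reCN.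
have hkaD : ka <= complex.Re `|ka%:C - D| + complex.Re `|D|.
  have := reCD (ka%:C - D) D; rewrite subrK normC_real gtr0_norm //.
have hkD : complex.Re `|ka%:C - D| <= complex.Re `|lam th - 1| + complex.Re `|mu - 1| + complex.Re `|N| * complex.Re `|1 - e|.
  rewrite hDk reCN -reCM.
  apply: le_trans (reCD _ _) _; rewrite lerD2r.
  exact: reCD.
have hKd1 : Kd * rho <= `|Kd| * rho by rewrite ler_wpM2r // ler_norm.
have hk' : rho * (4 * (`|Kd| + 1)) < ka by rewrite -ltr_pdivlMr // mulr_gt0.
have hKd2 : `|Kd| * rho <= (`|Kd| + 1) * rho by rewrite ler_wpM2r // lerDl.
have hDn : ka / 2 <= complex.Re `|D| by nra.
have hK1 : K * rho ^+ 5 <= `|K| * rho ^+ 5 by rewrite ler_wpM2r ?exprn_ge0 // ler_norm.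
have L0 := reC0 (lam th - mu).
have hLk : complex.Re `|lam th - mu| * ka <= 2 * `|K| * rho ^+ 5 by nra.
have hw4 : th%:C ^+ 4 = w ^+ 4 by rewrite /w exprMn i4 mul1r rmorphN; ring.
rewrite hw4.
have -> : lam th - f - cr * w ^+ 4 = lam th - mu by rewrite /mu; ring.
rewrite -rmorphXn -rmorphM reC.
have r5 : 0 <= rho ^+ 5 by rewrite exprn_ge0.
have : complex.Re `|lam th - mu| <= 2 * `|K| * rho ^+ 5 / ka by rewrite ler_pdivlMr.
have : 2 * `|K| * rho ^+ 5 / ka = 2 * `|K| / ka * rho ^+ 5 by rewrite mulrAC.
nra.
Qed.
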